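(* Let $Y$ be a continuous random variable supported on $[0,\infty)$ whose density $f$ satisfies $f(t)\le Ce^{-\lambda t}$ for all $t\ge0$, for some $C,\lambda>0$, and such that the support of $Y$ can be partitioned into $N$ intervals on each of which $f$ is differentiable and monotone. Let $\alpha$ satisfy $0<\alpha\le\lambda/2$. Then there is a constant $K_\alpha$ (depending on $\alpha,C,\lambda,N$) such that for every complex $s$ with $\Re s = -\alpha$, \[ |\mathbb{E}[e^{-sY}]| \le \frac{K_\alpha}{\sqrt{|s|}}. \] *)

(* Defs.v *)
From Stdlib Require Import Reals.
From Coquelicot Require Import Coquelicot.
Open Scope R_scope.

Definition Cexp (z : C) : C :=
  (exp (Re z) * cos (Im z), exp (Re z) * sin (Im z)).

Definition is_density_on_nonneg (f : R -> R) : Prop :=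
  (forall t, 0 <= f t) /\
  (forall t, t < 0 -> f t = 0) /\
  is_RInt_gen f (at_point 0) (Rbar_locally p_infty) 1.

(* E[e^{-sY}] for Y with density f supported on [0,oo):
   the (improper) integral  \int_0^oo e^{-s t} f(t) dt  (C-valued) *)
Definition laplace_density (f : R -> R) (s : C) : C :=
  @RInt_gen C_R_CompleteNormedModule
    (fun t : R => scal (f t) (Cexp (Copp (Cmult s (RtoC t)))))
    (at_point 0) (Rbar_locally p_infty).

Definition monotone_on (f : R -> R) (a : R) (b : Rbar) : Prop :=
  (forall x y, a < x -> x <= y -> Rbar_lt y b -> f x <= f y) \/
  (forall x y, a < x -> x <= y -> Rbar_lt y b -> f y <= f x).

Definition piecewise_diff_monotone (N : nat) (f : R -> R) : Prop :=
  exists (a : nat -> R) (b : nat -> Rbar),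
    (forall i, (i < N)%nat -> 0 <= a i /\ Rbar_lt (a i) (b i)) /\
    (forall i j, (i < j)%nat -> (j < N)%nat ->
        Rbar_le (b i) (a j) \/ Rbar_le (b j) (a i)) /\
    (forall t, 0 <= t -> f t <> 0 ->
        exists i, (i < N)%nat /\ a i <= t /\ Rbar_le t (b i)) /\
    (forall i, (i < N)%nat ->
        (forall t, a i < t -> Rbar_lt t (b i) -> ex_derive f t) /\
        monotone_on f (a i) (b i)).

(* Main.v *)
Require Import Defs.
From Stdlib Require Import Reals Lra Lia List.
From Coquelicot Require Import Coquelicot.
Open Scope R_scope.


Lemma Rabs_R_norm (x : R) : norm x = Rabs x.
Proof. reflexivity. Qed.

Lemma Int_part_nat (r : R) (k : nat) : INR k < r < INR k + 1 -> Int_part r = Z.of_nat k.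
Proof.
  intros H. symmetry. apply Int_part_spec. rewrite <- INR_IZR_INZ. lra.
Qed.

Lemma ex_RInt_mult_cont (f g : R -> R) (a b : R) :
  a < b -> ex_RInt f a b -> (forall x, a <= x <= b -> continuous g x) ->
  ex_RInt (fun t => f t * g t) a b.
Proof.
  intros Hab Hf Hg.
  destruct (ex_RInt_ub f a b Hf) as [M HM].
  rewrite Rmin_left in HM by lra. rewrite Rmax_right in HM by lra.
  set (M' := Rabs M + 1).
  assert (HM' : forall t, a <= t <= b -> Rabs (f t) <= M').
  { intros t Ht. specialize (HM t Ht). rewrite Rabs_R_norm in HM.
    unfold M'. pose proof (Rle_abs M). lra. }
  assert (M'pos : 0 < M') by (unfold M'; pose proof (Rabs_pos M); lra).
  set (d := fun n : nat => (b - a) / INR (S n)).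
  assert (dpos : forall n, 0 < d n).
  { intros n. unfold d. apply Rdiv_lt_0_compat. lra. apply lt_0_INR. lia. }
  set (sg := fun n t => a + d n * IZR (Int_part ((t - a) / d n))).
  set (h := fun (n : nat) (t : R) =>
    if Rle_dec a t then if Rle_dec t b then f t * g (sg n t) else f t * g t
    else f t * g t).
  assert (Hsg : forall n t, a <= t <= b -> a <= sg n t <= t /\ t - sg n t < d n).
  { intros n t Ht. unfold sg.
    destruct (base_Int_part ((t - a) / d n)) as [H1 H2].
    assert (Hq : 0 <= (t - a) / d n).
    { apply Rmult_le_pos. lra. left. apply Rinv_0_lt_compat, dpos. }
    assert (Hi : 0 <= IZR (Int_part ((t - a) / d n))).
    { apply IZR_le. apply lt_IZR in H2 || idtac.
      assert (-1 < IZR (Int_part ((t - a) / d n))) by lra.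
      apply lt_IZR in H. lia. }
    pose proof (dpos n).
    assert (E : d n * ((t - a) / d n) = t - a) by (field; lra).
    repeat split.
    - pose proof (Rmult_le_pos _ _ (Rlt_le _ _ H) Hi). lra.
    - pose proof (Rmult_le_compat_l (d n) _ _ (Rlt_le _ _ H) H1). lra.
    - assert (d n * ((t - a) / d n - 1) < d n * IZR (Int_part ((t - a) / d n))).
      { apply Rmult_lt_compat_l. lra. lra. }
      rewrite Rmult_minus_distr_l, E, Rmult_1_r in H0. lra. }
  assert (Hh : forall n, ex_RInt (h n) a b).
  { intros n.
    assert (Hk : forall k, (k <= S n)%nat -> ex_RInt (h n) a (a + INR k * d n)).
    { induction k as [|k IH]; intros Hk.
      - rewrite Rmult_0_l, Rplus_0_r. apply ex_RInt_point.
      - assert (Hkd : INR (S k) * d n <= b - a).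
        { assert (E : INR (S n) * d n = b - a).
          { unfold d. field. apply not_0_INR. lia. }
          rewrite <- E. apply Rmult_le_compat_r. left; apply dpos.
          apply le_INR; lia. }
        pose proof (dpos n).
        rewrite S_INR in Hkd |- *.
        pose proof (pos_INR k).
        assert (HK0 : 0 <= INR k * d n) by (apply Rmult_le_pos; lra).
        replace ((INR k + 1) * d n) with (INR k * d n + d n) in * by ring.
        apply ex_RInt_Chasles_0 with (a + INR k * d n).
        + lra.
        + apply IH. lia.
        + apply ex_RInt_ext with (fun t => scal (g (a + d n * INR k)) (f t)).
          * intros x Hx. rewrite Rmin_left in Hx by lra. rewrite Rmax_right in Hx by lra.
            unfold h. destruct (Rle_dec a x) as [_|C1]; [|exfalso; lra].
            destruct (Rle_dec x b) as [_|C2]; [|exfalso; lra].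
            unfold sg. rewrite (Int_part_nat _ k).
            rewrite <- INR_IZR_INZ. unfold scal; simpl. unfold mult; simpl. ring.
            split.
            { apply Rmult_lt_reg_r with (d n). lra. unfold Rdiv. rewrite Rmult_assoc, Rinv_l by lra. lra. }
            { apply Rmult_lt_reg_r with (d n). lra. unfold Rdiv. rewrite Rmult_assoc, Rinv_l by lra. lra. }
          * apply (ex_RInt_scal f).
            apply (ex_RInt_Chasles_2 f a). lra.
            apply (ex_RInt_Chasles_1 f _ _ b). lra. exact Hf. }
    specialize (Hk (S n) (le_n _)).
    replace (a + INR (S n) * d n) with b in Hk. exact Hk.
    unfold d. field. apply not_0_INR. lia. }
  assert (Hlim : filterlim h eventually
     (@locally (fct_UniformSpace R R_UniformSpace) (fun t => f t * g t))).
  { intros P [eps HP].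
    assert (eps'pos : 0 < eps / M') by (apply Rdiv_lt_0_compat; [apply cond_pos|exact M'pos]).
    destruct (unifcont_normed_1d g a b Hg (mkposreal _ eps'pos)) as [dl Hdl].
    destruct (archimed ((b - a) / dl)) as [Hup _].
    exists (Z.to_nat (up ((b - a) / dl))). intros n Hn.
    apply HP. intros t. simpl.
    unfold h. destruct (Rle_dec a t) as [H1|H1].
    2:{ apply ball_center. }
    destruct (Rle_dec t b) as [H2|H2].
    2:{ apply ball_center. }
    assert (Ht : a <= t <= b) by lra.
    destruct (Hsg n t Ht) as [[Hs1 Hs2] Hs3].
    assert (Hdn : d n < dl).
    { unfold d. pose proof (cond_pos dl).
      assert (Hpos : 0 < (b - a) / dl) by (apply Rdiv_lt_0_compat; lra).
      assert (IZR (up ((b - a) / dl)) <= INR n).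
      { rewrite INR_IZR_INZ. apply IZR_le.
        assert (0 <= up ((b - a) / dl))%Z.
        { apply le_IZR. lra. }
        lia. }
      apply Rmult_lt_reg_r with (INR (S n)). apply lt_0_INR; lia.
      unfold Rdiv. rewrite Rmult_assoc, Rinv_l by (apply not_0_INR; lia).
      rewrite S_INR.
      apply Rmult_lt_reg_r with (/ dl). apply Rinv_0_lt_compat. lra.
      rewrite Rmult_1_r. replace (dl * (INR n + 1) * / dl) with (INR n + 1) by (field; lra).
      unfold Rdiv in Hup. lra. }
    assert (Hb : ball_norm (g t) (eps / M') (g (sg n t))).
    { apply (Hdl t (sg n t) Ht (conj Hs1 (Rle_trans _ _ _ Hs2 H2))).
      change (Rabs (minus (sg n t) t) < dl). unfold minus, plus, opp; simpl.
      rewrite Rabs_left1 by lra. lra. }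
    unfold ball_norm in Hb. rewrite Rabs_R_norm in Hb.
    change (Rabs (minus (f t * g (sg n t)) (f t * g t)) < eps).
    unfold minus, plus, opp in Hb |- *; simpl in Hb |- *.
    replace (f t * g (sg n t) + - (f t * g t)) with (f t * (g (sg n t) + - g t)) by ring.
    rewrite Rabs_mult.
    pose proof (HM' t Ht). pose proof (Rabs_pos (g (sg n t) + - g t)).
    pose proof (Rabs_pos (f t)).
    apply Rle_lt_trans with (M' * Rabs (g (sg n t) + - g t)).
    apply Rmult_le_compat_r; lra.
    apply Rmult_lt_reg_r with (/ M'). apply Rinv_0_lt_compat; lra.
    replace (M' * Rabs (g (sg n t) + - g t) * / M') with (Rabs (g (sg n t) + - g t)) by (field; lra).
    exact Hb. }
  destruct (filterlim_RInt h a b eventually _ (fun t => f t * g t)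
    (fun n => RInt (h n) a b)) as [If [_ HIf]].
  - intros n. apply RInt_correct, Hh.
  - exact Hlim.
  - exists If. exact HIf.
Qed.


Lemma RInt_bound_open (u : R -> R) (a b B : R) :
  a <= b -> ex_RInt u a b -> (forall t, a < t < b -> Rabs (u t) <= B) ->
  Rabs (RInt u a b) <= (b - a) * B.
Proof.
  intros Hab Hu HB.
  assert (Hc : RInt (fun _ => B) a b = (b - a) * B).
  { rewrite RInt_const. reflexivity. }
  assert (Hc' : RInt (fun _ => - B) a b = (b - a) * - B).
  { rewrite RInt_const. reflexivity. }
  assert (H1 : RInt u a b <= RInt (fun _ => B) a b).
  { apply RInt_le; auto. apply ex_RInt_const. intros x Hx. specialize (HB x Hx).
    apply Rabs_le_between in HB. lra. }
  assert (H2 : RInt (fun _ => - B) a b <= RInt u a b).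
  { apply RInt_le; auto. apply ex_RInt_const. intros x Hx. specialize (HB x Hx).
    apply Rabs_le_between in HB. lra. }
  apply Rabs_le. lra.
Qed.

Lemma RInt_sign_bound (D k : R -> R) (a b : R) :
  a <= b -> ex_RInt D a b -> ex_RInt (fun t => D t * k t) a b ->
  (forall t, Rabs (k t) <= 1) ->
  ((forall t, a < t < b -> 0 <= D t) \/ (forall t, a < t < b -> D t <= 0)) ->
  Rabs (RInt (fun t => D t * k t) a b) <= Rabs (RInt D a b).
Proof.
  intros Hab HD HDk Hk [Hs|Hs].
  - assert (H1 : RInt (fun t => D t * k t) a b <= RInt D a b).
    { apply RInt_le; auto. intros x Hx. specialize (Hs x Hx). specialize (Hk x).
      apply Rabs_le_between in Hk. nra. }
    assert (H2 : RInt (fun t => - D t) a b <= RInt (fun t => D t * k t) a b).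
    { apply RInt_le; auto. apply (ex_RInt_opp D). auto. intros x Hx. specialize (Hs x Hx). specialize (Hk x).
      apply Rabs_le_between in Hk. nra. }
    assert (H3 : RInt (fun t => - D t) a b = - RInt D a b).
    { apply (RInt_opp D). auto. }
    assert (H4 : 0 <= RInt D a b) by (apply RInt_ge_0; auto).
    rewrite (Rabs_right (RInt D a b)) by lra. apply Rabs_le. lra.
  - assert (H1 : RInt D a b <= RInt (fun t => D t * k t) a b).
    { apply RInt_le; auto. intros x Hx. specialize (Hs x Hx). specialize (Hk x).
      apply Rabs_le_between in Hk. nra. }
    assert (H2 : RInt (fun t => D t * k t) a b <= RInt (fun t => - D t) a b).
    { apply RInt_le; auto. apply (ex_RInt_opp D). auto. intros x Hx. specialize (Hs x Hx). specialize (Hk x).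
      apply Rabs_le_between in Hk. nra. }
    assert (H3 : RInt (fun t => - D t) a b = - RInt D a b).
    { apply (RInt_opp D). auto. }
    assert (H4 : 0 <= RInt (fun t => - D t) a b).
    { apply RInt_ge_0; auto. apply (ex_RInt_opp D). auto. intros x Hx. specialize (Hs x Hx). lra. }
    rewrite (Rabs_left1 (RInt D a b)) by lra. apply Rabs_le. lra.
Qed.


Lemma ex_RInt_shift (u : R -> R) (a b h : R) :
  ex_RInt u (a + h) (b + h) -> ex_RInt (fun t => u (t + h)) a b.
Proof.
  intros H.
  assert (H' : ex_RInt u (1 * a + h) (1 * b + h)) by (rewrite !Rmult_1_l; exact H).
  apply (ex_RInt_comp_lin u 1 h a b) in H'.
  apply (ex_RInt_ext _ _ a b) with (2 := H').
  intros x _. unfold scal; simpl; unfold mult; simpl. rewrite !Rmult_1_l. reflexivity.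
Qed.

Lemma RInt_shift (u : R -> R) (a b h : R) :
  ex_RInt u (a + h) (b + h) -> RInt (fun t => u (t + h)) a b = RInt u (a + h) (b + h).
Proof.
  intros H.
  assert (H' : ex_RInt u (1 * a + h) (1 * b + h)) by (rewrite !Rmult_1_l; exact H).
  pose proof (RInt_comp_lin u 1 h a b H') as E.
  rewrite !Rmult_1_l in E. rewrite <- E.
  apply RInt_ext. intros x _. unfold scal; simpl; unfold mult; simpl. rewrite !Rmult_1_l. reflexivity.
Qed.

Lemma RInt_Chasles_R (u : R -> R) (a b c : R) :
  a <= b <= c -> ex_RInt u a c -> RInt u a c = RInt u a b + RInt u b c.
Proof.
  intros H Hu. symmetry. apply (RInt_Chasles u a b c).
  apply (ex_RInt_Chasles_1 u a b c H Hu). apply (ex_RInt_Chasles_2 u a b c H Hu).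
Qed.

Lemma ex_RInt_sub (u : R -> R) (a b c d : R) :
  a <= c -> c <= d -> d <= b -> ex_RInt u a b -> ex_RInt u c d.
Proof.
  intros H1 H2 H3 Hu.
  apply (ex_RInt_Chasles_2 u a c d). lra.
  apply (ex_RInt_Chasles_1 u a d b). lra. exact Hu.
Qed.

Lemma shift_bound (Phi k : R -> R) (a b h M : R) :
  a < b -> 0 < h -> ex_RInt Phi a b ->
  (forall x, continuous k x) -> (forall x, Rabs (k x) <= 1) ->
  (forall x, k (x + h) = - k x) ->
  (forall t, a < t < b -> 0 <= Phi t <= M) ->
  ((forall x y, a < x -> x <= y -> y < b -> Phi x <= Phi y) \/
   (forall x y, a < x -> x <= y -> y < b -> Phi y <= Phi x)) ->
  Rabs (RInt (fun t => Phi t * k t) a b) <= 2 * M * h.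
Proof.
  intros Hab Hh HPhi Hkc Hk1 Hkh HM Hmon.
  set (P := fun t => Phi t * k t).
  assert (HP : ex_RInt P a b).
  { apply ex_RInt_mult_cont; auto. }
  assert (HPb : forall t, a < t < b -> Rabs (P t) <= M).
  { intros t Ht. unfold P. rewrite Rabs_mult. specialize (HM t Ht). specialize (Hk1 t).
    rewrite Rabs_right by lra. pose proof (Rabs_pos (k t)).
    replace M with (M * 1) by ring. apply Rmult_le_compat; lra. }
  assert (M0 : 0 <= M) by (destruct (HM ((a+b)/2)); lra).
  destruct (Rle_lt_dec (b - a) (2 * h)) as [Hs|Hl].
  { eapply Rle_trans. apply RInt_bound_open; auto. lra.
    replace (2 * M * h) with ((2 * h) * M) by ring. apply Rmult_le_compat_r; lra. }
  set (Q := fun u => Phi (u + h) * k u).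
  assert (HQe : forall u, Q u = - P (u + h)).
  { intros u. unfold Q, P. rewrite Hkh. ring. }
  assert (HPs : ex_RInt (fun t => P (t + h)) (a - h) (b - h)).
  { apply ex_RInt_shift. replace (a - h + h) with a by ring. replace (b - h + h) with b by ring. exact HP. }
  assert (HQ : ex_RInt Q (a - h) (b - h)).
  { apply (ex_RInt_ext (fun t => opp (P (t + h)))). intros x _. rewrite HQe. reflexivity.
    apply (ex_RInt_opp (fun t => P (t + h))). exact HPs. }
  assert (EQ1 : RInt P a b = - RInt Q (a - h) (b - h)).
  { rewrite (RInt_ext Q (fun t => opp (P (t + h)))) by (intros x _; rewrite HQe; reflexivity).
    rewrite (RInt_opp (fun t => P (t + h))) by exact HPs.
    rewrite RInt_shift. replace (a - h + h) with a by ring. replace (b - h + h) with b by ring.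
    change (RInt P a b = - (- RInt P a b)). symmetry. apply Ropp_involutive.
    replace (a - h + h) with a by ring. replace (b - h + h) with b by ring. exact HP. }
  assert (E2 : RInt P a b = RInt P a (b - h) + RInt P (b - h) b).
  { apply RInt_Chasles_R. lra. exact HP. }
  assert (E3 : RInt Q (a - h) (b - h) = RInt Q (a - h) a + RInt Q a (b - h)).
  { apply RInt_Chasles_R. lra. exact HQ. }
  assert (B1 : Rabs (RInt P (b - h) b) <= h * M).
  { replace h with (b - (b - h)) at 2 by ring. apply RInt_bound_open. lra.
    apply (ex_RInt_sub P a b). lra. lra. lra. exact HP.
    intros t Ht. apply HPb. lra. }
  assert (B2 : Rabs (RInt Q (a - h) a) <= h * M).
  { replace h with (a - (a - h)) at 2 by ring. apply RInt_bound_open. lra.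
    apply (ex_RInt_sub Q (a - h) (b - h)). lra. lra. lra. exact HQ.
    intros t Ht. rewrite HQe, Rabs_Ropp. apply HPb. lra. }
  set (D := fun u => Phi u - Phi (u + h)).
  assert (HPhis : ex_RInt (fun t => Phi (t + h)) a (b - h)).
  { apply ex_RInt_shift. replace (b - h + h) with b by ring.
    apply (ex_RInt_sub Phi a b). lra. lra. lra. exact HPhi. }
  assert (HPhi1 : ex_RInt Phi a (b - h)).
  { apply (ex_RInt_sub Phi a b). lra. lra. lra. exact HPhi. }
  assert (HD : ex_RInt D a (b - h)).
  { apply (ex_RInt_minus Phi (fun t => Phi (t + h))); auto. }
  assert (ED : RInt D a (b - h) = RInt Phi a (b - h) - RInt (fun t => Phi (t + h)) a (b - h)).
  { apply (RInt_minus Phi (fun t => Phi (t + h))); auto. }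
  rewrite RInt_shift in ED.
  2:{ replace (b - h + h) with b by ring. apply (ex_RInt_sub Phi a b). lra. lra. lra. exact HPhi. }
  replace (b - h + h) with b in ED by ring.
  rewrite (RInt_Chasles_R Phi a (a + h) (b - h)) in ED by (auto; lra).
  rewrite (RInt_Chasles_R Phi (a + h) (b - h) b) in ED.
  2: lra.
  2:{ apply (ex_RInt_sub Phi a b). lra. lra. lra. exact HPhi. }
  assert (A1 : 0 <= RInt Phi a (a + h) <= h * M).
  { split. apply RInt_ge_0. lra. apply (ex_RInt_sub Phi a b). lra. lra. lra. exact HPhi.
    intros x Hx. apply HM. lra.
    pose proof (RInt_bound_open Phi a (a + h) M) as T.
    assert (Rabs (RInt Phi a (a + h)) <= (a + h - a) * M).
    { apply T. lra. apply (ex_RInt_sub Phi a b). lra. lra. lra. exact HPhi.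
      intros t Ht. rewrite Rabs_right. apply HM. lra. destruct (HM t). lra. lra. }
    pose proof (Rle_abs (RInt Phi a (a + h))). replace (a + h - a) with h in H by ring. lra. }
  assert (A2 : 0 <= RInt Phi (b - h) b <= h * M).
  { split. apply RInt_ge_0. lra. apply (ex_RInt_sub Phi a b). lra. lra. lra. exact HPhi.
    intros x Hx. apply HM. lra.
    pose proof (RInt_bound_open Phi (b - h) b M) as T.
    assert (Rabs (RInt Phi (b - h) b) <= (b - (b - h)) * M).
    { apply T. lra. apply (ex_RInt_sub Phi a b). lra. lra. lra. exact HPhi.
      intros t Ht. rewrite Rabs_right. apply HM. lra. destruct (HM t). lra. lra. }
    pose proof (Rle_abs (RInt Phi (b - h) b)). replace (b - (b - h)) with h in H by ring. lra. }
  assert (BD : Rabs (RInt D a (b - h)) <= h * M).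
  { rewrite ED. apply Rabs_le. lra. }
  assert (HPa : ex_RInt P a (b - h)).
  { apply (ex_RInt_sub P a b). lra. lra. lra. exact HP. }
  assert (HQa : ex_RInt Q a (b - h)).
  { apply (ex_RInt_sub Q (a - h) (b - h)). lra. lra. lra. exact HQ. }
  assert (EPQ : RInt P a (b - h) - RInt Q a (b - h) = RInt (fun t => D t * k t) a (b - h)).
  { rewrite <- (RInt_minus P Q) by auto. apply RInt_ext. intros x _.
    unfold minus, plus, opp, P, Q, D; simpl. ring. }
  assert (HDk : ex_RInt (fun t => D t * k t) a (b - h)).
  { apply (ex_RInt_ext (fun t => minus (P t) (Q t))). intros x _.
    unfold minus, plus, opp, P, Q, D; simpl. ring.
    apply (ex_RInt_minus P Q); [exact HPa | exact HQa]. }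
  assert (BDk : Rabs (RInt (fun t => D t * k t) a (b - h)) <= h * M).
  { eapply Rle_trans. apply (RInt_sign_bound D k a (b - h)). lra. exact HD. exact HDk. exact Hk1.
    destruct Hmon as [Hm|Hm].
    - right. intros t Ht. unfold D. assert (Phi t <= Phi (t + h)) by (apply Hm; lra). lra.
    - left. intros t Ht. unfold D. assert (Phi (t + h) <= Phi t) by (apply Hm; lra). lra.
    - exact BD. }
  assert (E4 : 2 * RInt P a b = RInt (fun t => D t * k t) a (b - h) + RInt P (b - h) b - RInt Q (a - h) a).
  { rewrite <- EPQ. lra. }
  assert (Rabs (2 * RInt P a b) <= 3 * (h * M)).
  { rewrite E4. eapply Rle_trans. apply Rabs_triang.
    eapply Rle_trans. apply Rplus_le_compat. apply Rabs_triang. rewrite Rabs_Ropp. apply Rle_refl.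
    lra. }
  rewrite Rabs_mult, Rabs_right in H by lra.
  assert (0 <= h * M) by (apply Rmult_le_pos; lra).
  change (Rabs (RInt P a b) <= 2 * M * h). lra.
Qed.


Lemma cont_deriv (g : R -> R) x : ex_derive g x -> continuous g x.
Proof. apply (@ex_derive_continuous R_AbsRing R_NormedModule). Qed.

Lemma is_RInt_zero u v : is_RInt (fun _ : R => 0) u v 0.
Proof.
  pose proof (@is_RInt_const R_NormedModule u v zero) as H.
  replace (scal (v - u) (@zero R_NormedModule)) with (@zero R_NormedModule) in H.
  exact H. symmetry. apply (@scal_zero_r R_AbsRing R_NormedModule).
Qed.

Lemma is_RInt_point_supp (p c a b : R) :
  is_RInt (fun t => if Req_EM_T t p then c else 0) a b 0.
Proof.
  assert (H0 : forall u v, (p <= Rmin u v \/ Rmax u v <= p) ->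
     is_RInt (fun t => if Req_EM_T t p then c else 0) u v 0).
  { intros u v Huv.
    apply (@is_RInt_ext R_NormedModule (fun _ => 0)).
    - intros x Hx. destruct (Req_EM_T x p); [subst; lra | reflexivity].
    - apply is_RInt_zero. }
  assert (A1 : is_RInt (fun t => if Req_EM_T t p then c else 0) a p 0).
  { apply H0. destruct (Rle_dec a p); [right; rewrite Rmax_right; lra | left; rewrite Rmin_right; lra]. }
  assert (A2 : is_RInt (fun t => if Req_EM_T t p then c else 0) p b 0).
  { apply H0. destruct (Rle_dec p b); [left; rewrite Rmin_left; lra | right; rewrite Rmax_left; lra]. }
  pose proof (@is_RInt_Chasles R_NormedModule _ a p b 0 0 A1 A2) as H.
  change (plus 0 0) with (Rplus 0 0) in H. rewrite Rplus_0_r in H. exact H.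
Qed.

Lemma is_RInt_finite_supp (pts : list R) : forall (d : R -> R) (a b : R),
  (forall t, ~ In t pts -> d t = 0) -> is_RInt d a b 0.
Proof.
  induction pts as [|p ps IH]; intros d a b Hd.
  - apply (@is_RInt_ext R_NormedModule (fun _ => 0)).
    + intros x _. symmetry. apply Hd. simpl. tauto.
    + apply is_RInt_zero.
  - set (d' := fun t => if Req_EM_T t p then 0 else d t).
    assert (H1 : is_RInt d' a b 0).
    { apply IH. intros t Ht. unfold d'. destruct (Req_EM_T t p) as [_|Hne]. reflexivity.
      apply Hd. simpl. intros [E|E]. congruence. tauto. }
    pose proof (is_RInt_point_supp p (d p) a b) as H2.
    pose proof (@is_RInt_plus R_NormedModule _ _ a b _ _ H1 H2) as H3.
    change (plus 0 0) with (Rplus 0 0) in H3. rewrite Rplus_0_r in H3.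
    apply (@is_RInt_ext R_NormedModule _ d) with (2 := H3).
    intros x _. unfold d', plus; simpl. destruct (Req_EM_T x p). subst. ring. ring.
Qed.

Fixpoint sumN (F : nat -> R) (n : nat) : R :=
  match n with O => 0 | S m => sumN F m + F m end.

Lemma sumN_ext (F G : nat -> R) n : (forall i, (i < n)%nat -> F i = G i) -> sumN F n = sumN G n.
Proof.
  induction n; intros H; simpl. reflexivity. rewrite IHn, H. reflexivity. lia. intros; apply H; lia.
Qed.

Lemma sumN_zero (F : nat -> R) n : (forall i, (i < n)%nat -> F i = 0) -> sumN F n = 0.
Proof.
  induction n; intros H; simpl. reflexivity. rewrite IHn, H. ring. lia. intros; apply H; lia.
Qed.

Lemma sumN_one (F : nat -> R) n i : (i < n)%nat -> (forall j, (j < n)%nat -> j <> i -> F j = 0) ->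
  sumN F n = F i.
Proof.
  induction n; intros Hi H. lia. simpl.
  destruct (Nat.eq_dec i n) as [->|Hne].
  - rewrite sumN_zero. ring. intros j Hj. apply H; lia.
  - rewrite IHn, (H n). ring. lia. lia. lia. intros j Hj Hji; apply H; lia.
Qed.

Lemma sumN_bound (F : nat -> R) n B : (forall i, (i < n)%nat -> Rabs (F i) <= B) ->
  Rabs (sumN F n) <= INR n * B.
Proof.
  induction n; intros H; cbn [sumN]. rewrite Rabs_R0. simpl. lra.
  rewrite S_INR. eapply Rle_trans. apply Rabs_triang.
  assert (Rabs (sumN F n) <= INR n * B) by (apply IHn; intros; apply H; lia).
  assert (Rabs (F n) <= B) by (apply H; lia). lra.
Qed.

Lemma is_RInt_sumN (G : nat -> R -> R) (I : nat -> R) a b n :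
  (forall i, (i < n)%nat -> is_RInt (G i) a b (I i)) ->
  is_RInt (fun t => sumN (fun i => G i t) n) a b (sumN I n).
Proof.
  induction n; intros H; simpl.
  - apply (@is_RInt_ext R_NormedModule (fun _ => 0)). intros; reflexivity.
    apply is_RInt_zero.
  - apply (@is_RInt_plus R_NormedModule (fun t => sumN (fun i => G i t) n) (G n)).
    apply IHn. intros; apply H; lia. apply H; lia.
Qed.


Lemma RInt_ext_R (f g : R -> R) a b : (forall x, f x = g x) -> RInt f a b = RInt g a b.
Proof. intros H. apply RInt_ext. intros x _. apply H. Qed.

Lemma exp_mono x y : x <= y -> exp x <= exp y.
Proof. intros [H|H]. left. apply exp_increasing, H. subst. lra. Qed.

Lemma fw_bound (f : R -> R) C0 lam al t :
  al <= lam -> 0 <= t -> 0 <= f t -> f t <= C0 * exp (- lam * t) ->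
  f t * exp (al * t) <= C0 * exp (- (lam - al) * t).
Proof.
  intros Hal Ht Hf Hb.
  replace (- (lam - al) * t) with (- lam * t + al * t) by ring.
  rewrite exp_plus. rewrite <- Rmult_assoc.
  apply Rmult_le_compat_r. left; apply exp_pos. exact Hb.
Qed.

Lemma exp_neg_le1 c t : 0 <= c -> 0 <= t -> exp (- c * t) <= 1.
Proof. intros Hc Ht. rewrite <- exp_0. apply exp_mono. nra. Qed.

Lemma piece_bound (f k : R -> R) (C0 lam al lo hi T h : R) :
  0 < C0 -> 0 < al -> al <= lam -> 0 < h -> 0 <= lo -> lo < hi -> hi <= T ->
  ex_RInt f lo hi ->
  (forall t, 0 <= f t) -> (forall t, 0 <= t -> f t <= C0 * exp (- lam * t)) ->
  (forall x, continuous k x) -> (forall x, Rabs (k x) <= 1) -> (forall x, k (x + h) = - k x) ->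
  ((forall x y, lo < x -> x <= y -> y < hi -> f x <= f y) \/
   (forall x y, lo < x -> x <= y -> y < hi -> f y <= f x)) ->
  Rabs (RInt (fun t => f t * (exp (al * t) * k t)) lo hi) <= 4 * C0 * exp (al * T) * h.
Proof.
  intros HC0 Hal Hall Hh Hlo Hlh HhT Hf Hf0 Hfb Hkc Hk1 Hkh Hmon.
  assert (HeT : 1 <= exp (al * T)).
  { rewrite <- exp_0. apply exp_mono. nra. }
  assert (Hfc : forall t, 0 <= t -> f t <= C0).
  { intros t Ht. eapply Rle_trans. apply Hfb, Ht.
    pose proof (exp_neg_le1 lam t ltac:(lra) Ht). nra. }
  destruct Hmon as [Hm|Hm].
  -
    set (Phi := fun t => f t * exp (al * t)).
    assert (HPhi : ex_RInt Phi lo hi).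
    { apply ex_RInt_mult_cont. exact Hlh. exact Hf. intros x _.
      apply cont_deriv. auto_derive. auto. }
    assert (B : Rabs (RInt (fun t => Phi t * k t) lo hi) <= 2 * C0 * h).
    { apply shift_bound. exact Hlh. exact Hh. exact HPhi. exact Hkc. exact Hk1. exact Hkh.
      - intros t Ht. unfold Phi. split.
        apply Rmult_le_pos. apply Hf0. left; apply exp_pos.
        eapply Rle_trans. apply (fw_bound f C0 lam al t); try lra. apply Hf0. apply Hfb; lra.
        pose proof (exp_neg_le1 (lam - al) t ltac:(lra) ltac:(lra)). nra.
      - left. intros x y H1 H2 H3. unfold Phi. apply Rmult_le_compat.
        apply Hf0. left; apply exp_pos. apply Hm; lra. apply exp_mono. nra. }
    rewrite (RInt_ext_R _ (fun t => Phi t * k t)).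
    2:{ intros x. unfold Phi. ring. }
    eapply Rle_trans. exact B.
    assert (C0 * h * 1 <= C0 * h * exp (al * T)).
    { apply Rmult_le_compat_l. apply Rmult_le_pos; lra. lra. }
    assert (0 <= C0 * h) by (apply Rmult_le_pos; lra).
    lra.
  -
    set (E := exp (al * hi)).
    set (Phi1 := fun t => f t * E).
    set (Phi2 := fun t => f t * (E - exp (al * t))).
    assert (HE : 0 < E) by apply exp_pos.
    assert (HET : E <= exp (al * T)) by (apply exp_mono; nra).
    assert (HP1 : ex_RInt Phi1 lo hi).
    { apply ex_RInt_mult_cont. exact Hlh. exact Hf. intros x _.
      apply cont_deriv. auto_derive. auto. }
    assert (HP2 : ex_RInt Phi2 lo hi).
    { apply ex_RInt_mult_cont. exact Hlh. exact Hf. intros x _.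
      apply cont_deriv. auto_derive. auto. }
    assert (Hw : forall t, t <= hi -> 0 <= E - exp (al * t) <= E).
    { intros t Ht. pose proof (exp_pos (al * t)).
      assert (exp (al * t) <= E) by (apply exp_mono; nra). lra. }
    assert (B1 : Rabs (RInt (fun t => Phi1 t * k t) lo hi) <= 2 * (C0 * E) * h).
    { apply shift_bound. exact Hlh. exact Hh. exact HP1. exact Hkc. exact Hk1. exact Hkh.
      - intros t Ht. unfold Phi1. split.
        apply Rmult_le_pos. apply Hf0. lra.
        apply Rmult_le_compat_r. lra. apply Hfc. lra.
      - right. intros x y H1 H2 H3. unfold Phi1. apply Rmult_le_compat_r. lra. apply Hm; lra. }
    assert (B2 : Rabs (RInt (fun t => Phi2 t * k t) lo hi) <= 2 * (C0 * E) * h).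
    { apply shift_bound. exact Hlh. exact Hh. exact HP2. exact Hkc. exact Hk1. exact Hkh.
      - intros t Ht. unfold Phi2. destruct (Hw t ltac:(lra)). split.
        apply Rmult_le_pos. apply Hf0. lra.
        apply Rmult_le_compat. apply Hf0. lra. apply Hfc. lra. lra.
      - right. intros x y H1 H2 H3. unfold Phi2.
        destruct (Hw x ltac:(lra)). destruct (Hw y ltac:(lra)).
        apply Rmult_le_compat. apply Hf0. lra. apply Hm; lra.
        assert (exp (al * x) <= exp (al * y)) by (apply exp_mono; nra). lra. }
    assert (HP1k : ex_RInt (fun t => Phi1 t * k t) lo hi).
    { apply ex_RInt_mult_cont. exact Hlh. exact HP1. intros; apply Hkc. }
    assert (HP2k : ex_RInt (fun t => Phi2 t * k t) lo hi).
    { apply ex_RInt_mult_cont. exact Hlh. exact HP2. intros; apply Hkc. }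
    rewrite (RInt_ext_R _ (fun t => minus (Phi1 t * k t) (Phi2 t * k t))).
    2:{ intros x. unfold Phi1, Phi2, minus, plus, opp; simpl. ring. }
    rewrite (RInt_minus (fun t => Phi1 t * k t) (fun t => Phi2 t * k t)) by assumption.
    change (Rabs (RInt (fun t => Phi1 t * k t) lo hi - RInt (fun t => Phi2 t * k t) lo hi)
      <= 4 * C0 * exp (al * T) * h).
    eapply Rle_trans. apply Rabs_triang. rewrite Rabs_Ropp.
    assert (C0 * E * h <= C0 * exp (al * T) * h).
    { apply Rmult_le_compat_r. lra. apply Rmult_le_compat_l; lra. }
    lra.
Qed.


Lemma is_RInt_ext_R (f g : R -> R) (a b l : R) :
  (forall x, Rmin a b < x < Rmax a b -> f x = g x) -> is_RInt f a b l -> is_RInt g a b l.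
Proof. apply (@is_RInt_ext R_NormedModule). Qed.

Definition ind (a : R) (b : Rbar) (t : R) : R :=
  if Rlt_dec a t then if Rbar_lt_dec t b then 1 else 0 else 0.

Lemma ind_one (a : R) (b : Rbar) (t : R) : a < t -> Rbar_lt t b -> ind a b t = 1.
Proof. intros H1 H2. unfold ind. destruct (Rlt_dec a t); [|lra]. destruct (Rbar_lt_dec t b); [reflexivity|contradiction]. Qed.

Lemma ind_zero1 (a : R) (b : Rbar) (t : R) : t <= a -> ind a b t = 0.
Proof. intros H. unfold ind. destruct (Rlt_dec a t); [lra|reflexivity]. Qed.

Lemma ind_zero2 (a : R) (b : Rbar) (t : R) : ~ Rbar_lt t b -> ind a b t = 0.
Proof. intros H. unfold ind. destruct (Rlt_dec a t); [|reflexivity]. destruct (Rbar_lt_dec t b); [contradiction|reflexivity]. Qed.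

Lemma head_bound (f k : R -> R) (C0 lam al T h : R) (N : nat) (a : nat -> R) (b : nat -> Rbar) :
  0 < C0 -> 0 < al -> al <= lam -> 0 < h -> 0 <= T ->
  (forall y, 0 <= y -> ex_RInt f 0 y) ->
  (forall t, 0 <= f t) -> (forall t, t < 0 -> f t = 0) ->
  (forall t, 0 <= t -> f t <= C0 * exp (- lam * t)) ->
  (forall i, (i < N)%nat -> 0 <= a i /\ Rbar_lt (a i) (b i)) ->
  (forall i j, (i < j)%nat -> (j < N)%nat -> Rbar_le (b i) (a j) \/ Rbar_le (b j) (a i)) ->
  (forall t, 0 <= t -> f t <> 0 -> exists i, (i < N)%nat /\ a i <= t /\ Rbar_le t (b i)) ->
  (forall i, (i < N)%nat -> monotone_on f (a i) (b i)) ->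
  (forall x, continuous k x) -> (forall x, Rabs (k x) <= 1) -> (forall x, k (x + h) = - k x) ->
  Rabs (RInt (fun t => f t * (exp (al * t) * k t)) 0 T) <= INR N * (4 * C0 * exp (al * T) * h).
Proof.
  intros HC0 Hal Hall Hh HT Hfi Hf0 Hfn Hfb Hab Hdis Hcov Hmon Hkc Hk1 Hkh.
  set (u := fun t => f t * (exp (al * t) * k t)).
  set (G := fun i t => u t * ind (a i) (b i) t).
  assert (Hu : forall lo hi, 0 <= lo -> lo < hi -> ex_RInt u lo hi).
  { intros lo hi H1 H2. apply ex_RInt_mult_cont. exact H2.
    apply (ex_RInt_Chasles_2 f 0 lo hi). lra. apply Hfi. lra.
    intros x _. apply (@continuous_mult R_UniformSpace R_AbsRing (fun t => exp (al * t)) k x).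
    apply cont_deriv. auto_derive. auto. apply Hkc. }
  assert (Hpiece : forall i, (i < N)%nat -> exists I, is_RInt (G i) 0 T I /\
             Rabs I <= 4 * C0 * exp (al * T) * h).
  { intros i Hi. destruct (Hab i Hi) as [Hai Hbi].
    assert (B0 : 0 <= 4 * C0 * exp (al * T) * h).
    { pose proof (exp_pos (al * T)). apply Rmult_le_pos; [|lra]. apply Rmult_le_pos; lra. }
    destruct (Rle_lt_dec T (a i)) as [HTa|HTa].
    - exists 0. split.
      + apply (is_RInt_ext_R (fun _ => 0)).
        intros x Hx. rewrite Rmin_left, Rmax_right in Hx by lra. unfold G.
        rewrite ind_zero1 by lra. ring.
        apply is_RInt_zero.
      + rewrite Rabs_R0. exact B0.
    - set (hi := match b i with Finite r => Rmin r T | _ => T end).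
      assert (Hhi : a i < hi <= T /\ Rbar_le hi (b i)).
      { unfold hi. destruct (b i) as [r| |]; simpl in Hbi |- *.
        - unfold Rmin. destruct (Rle_dec r T); lra.
        - lra.
        - contradiction. }
      destruct Hhi as [[Hhi1 Hhi2] Hhib].
      set (Ipc := RInt u (a i) hi).
      exists Ipc. split.
      + assert (A1 : is_RInt (G i) 0 (a i) 0).
        { apply (is_RInt_ext_R (fun _ => 0)).
          intros x Hx. rewrite Rmin_left, Rmax_right in Hx by lra. unfold G.
          rewrite ind_zero1 by lra. ring.
          apply is_RInt_zero. }
        assert (A2 : is_RInt (G i) (a i) hi Ipc).
        { apply (is_RInt_ext_R u).
          intros x Hx. rewrite Rmin_left, Rmax_right in Hx by lra. unfold G.
          rewrite ind_one. ring. lra.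
          destruct (b i) as [r| |]; simpl in Hhib |- *; lra || exact I || tauto.
          unfold Ipc. apply (@RInt_correct R_CompleteNormedModule). apply Hu; lra. }
        assert (A3 : is_RInt (G i) hi T 0).
        { apply (is_RInt_ext_R (fun _ => 0)).
          intros x Hx. rewrite Rmin_left, Rmax_right in Hx by lra. unfold G.
          rewrite ind_zero2. ring.
          unfold hi in Hx. destruct (b i) as [r| |]; simpl in Hx |- *; try lra.
          unfold Rmin in Hx. destruct (Rle_dec r T); lra.
          apply is_RInt_zero. }
        pose proof (@is_RInt_Chasles R_NormedModule _ _ _ _ _ _ A1 A2) as A12.
        pose proof (@is_RInt_Chasles R_NormedModule _ _ _ _ _ _ A12 A3) as A.
        change (plus (plus 0 Ipc) 0) with (Rplus (Rplus 0 Ipc) 0) in A.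
        rewrite Rplus_0_r, Rplus_0_l in A. exact A.
      + unfold Ipc, u. apply (piece_bound f k C0 lam al (a i) hi T h); try assumption.
        apply (ex_RInt_Chasles_2 f 0 (a i) hi). lra. apply Hfi. lra.
        destruct (Hmon i Hi) as [Hm|Hm]; [left|right]; intros x y H1 H2 H3; apply Hm; try assumption;
          destruct (b i) as [r| |]; simpl in Hhib |- *; try lra; tauto. }
  assert (Hch : exists I : nat -> R, forall i, (i < N)%nat -> is_RInt (G i) 0 T (I i) /\
             Rabs (I i) <= 4 * C0 * exp (al * T) * h).
  { clear -Hpiece. induction N as [|n IH].
    - exists (fun _ => 0). intros; lia.
    - destruct IH as [I HI]. intros i Hi; apply Hpiece; lia.
      destruct (Hpiece n (Nat.lt_succ_diag_r n)) as [In HIn].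
      exists (fun i => if Nat.eq_dec i n then In else I i).
      intros i Hi. destruct (Nat.eq_dec i n). subst; exact HIn. apply HI; lia. }
  destruct Hch as [I HI].
  assert (Hsum : is_RInt (fun t => sumN (fun i => G i t) N) 0 T (sumN I N)).
  { apply is_RInt_sumN. intros i Hi. apply HI, Hi. }
  set (pts := flat_map (fun i => a i :: real (b i) :: nil) (seq 0 N)).
  assert (Hd : is_RInt (fun t => u t - sumN (fun i => G i t) N) 0 T 0).
  { apply (is_RInt_finite_supp pts). intros t Hnt.
    assert (Hnpt : forall i, (i < N)%nat -> t <> a i /\ t <> real (b i)).
    { intros i Hi. split; intros E; apply Hnt; unfold pts; apply in_flat_map;
        exists i; (split; [apply in_seq; lia | simpl; auto]). }
    destruct (Rlt_le_dec t 0) as [Hneg|Hpos].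
    - assert (u t = 0) by (unfold u; rewrite Hfn by lra; ring).
      rewrite sumN_zero. lra. intros i _. unfold G. rewrite H. ring.
    - destruct (Req_dec (f t) 0) as [Hz|Hnz].
      + assert (u t = 0) by (unfold u; rewrite Hz; ring).
        rewrite sumN_zero. lra. intros i _. unfold G. rewrite H. ring.
      + destruct (Hcov t Hpos Hnz) as [i [Hi [H1 H2]]].
        destruct (Hnpt i Hi) as [N1 N2].
        assert (Hlt : Rbar_lt t (b i)).
        { destruct (b i) as [r| |]; simpl in H2, N2 |- *; try tauto; lra. }
        rewrite (sumN_one _ N i Hi).
        * unfold G. rewrite ind_one. ring. lra. exact Hlt.
        * intros j Hj Hji. unfold G.
          assert (Hij : ~ (a j < t /\ Rbar_lt t (b j))).
          { intros [Hj1 Hj2]. destruct (Hab i Hi) as [Hai Hbi]. destruct (Hab j Hj) as [Haj Hbj].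
            assert (Hc : Rbar_le (b i) (a j) \/ Rbar_le (b j) (a i)).
            { destruct (Nat.lt_total i j) as [L|[L|L]].
              - apply Hdis; assumption.
              - lia.
              - destruct (Hdis j i L Hi); [right|left]; assumption. }
            destruct Hc as [Hc|Hc].
            - destruct (b i) as [r| |]; simpl in Hc, Hlt; try tauto; lra.
            - destruct (b j) as [r| |]; simpl in Hc, Hj2; try tauto; lra. }
          unfold ind. destruct (Rlt_dec (a j) t); [|ring].
          destruct (Rbar_lt_dec t (b j)); [exfalso; tauto|ring]. }
  pose proof (@is_RInt_plus R_NormedModule _ _ 0 T _ _ Hsum Hd) as Htot.
  change (plus (sumN I N) 0) with (Rplus (sumN I N) 0) in Htot. rewrite Rplus_0_r in Htot.
  assert (E : RInt u 0 T = sumN I N).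
  { apply is_RInt_unique.
    apply (is_RInt_ext_R _ u) with (2 := Htot).
    intros x _. unfold plus; simpl. ring. }
  change (Rabs (RInt u 0 T) <= INR N * (4 * C0 * exp (al * T) * h)).
  rewrite E. apply sumN_bound. intros i Hi. apply HI, Hi.
Qed.


Lemma lim_cauchy (I : R -> R) :
  (forall eps, 0 < eps -> exists M, forall y y', M <= y -> y <= y' -> Rabs (I y' - I y) < eps) ->
  exists l, forall eps, 0 < eps -> exists M, forall y, M <= y -> Rabs (I y - l) < eps.
Proof.
  intros HC.
  set (F := filtermap I (Rbar_locally p_infty)).
  assert (HF : ProperFilter F).
  { apply filtermap_proper_filter. apply Rbar_locally_filter. }
  assert (Hc : forall eps : posreal, exists x : R, F (ball x eps)).
  { intros eps. destruct (HC eps (cond_pos eps)) as [M HM].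
    exists (I M). unfold F, filtermap. simpl. exists M. intros y Hy.
    change (Rabs (I y - I M) < eps). apply HM; lra. }
  exists (R_complete_lim F). intros eps Heps.
  pose proof (R_complete F HF Hc (mkposreal eps Heps)) as H.
  unfold F, filtermap in H. simpl in H. destruct H as [M HM].
  exists (M + 1). intros y Hy. specialize (HM y ltac:(lra)).
  change (Rabs (I y - R_complete_lim F) < eps) in HM. exact HM.
Qed.

Lemma lim_bound (I : R -> R) (l B M0 : R) :
  (forall eps, 0 < eps -> exists M, forall y, M <= y -> Rabs (I y - l) < eps) ->
  (forall y, M0 <= y -> Rabs (I y) <= B) -> Rabs l <= B.
Proof.
  intros Hl HB. destruct (Rle_lt_dec (Rabs l) B) as [H|H]. exact H. exfalso.
  destruct (Hl (Rabs l - B) ltac:(lra)) as [M HM].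
  specialize (HM (Rmax M M0) (Rmax_l _ _)). specialize (HB (Rmax M M0) (Rmax_r _ _)).
  pose proof (Rabs_triang_inv l (I (Rmax M M0))).
  rewrite Rabs_minus_sym in HM. lra.
Qed.

Lemma exp_int (C0 kap y y' : R) : 0 < kap ->
  is_RInt (fun t => C0 * exp (- kap * t)) y y'
    (C0 * (exp (- kap * y) - exp (- kap * y')) / kap).
Proof.
  intros Hk.
  set (F := fun t => - C0 * exp (- kap * t) / kap).
  replace (C0 * (exp (- kap * y) - exp (- kap * y')) / kap) with (minus (F y') (F y)).
  2:{ unfold F, minus, plus, opp; simpl. field. lra. }
  apply (@is_RInt_derive R_CompleteNormedModule F).
  - intros x _. unfold F. auto_derive. auto. field. lra.
  - intros x _. apply cont_deriv. auto_derive. auto.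
Qed.

Lemma tail_bound (u : R -> R) (C0 kap y y' : R) : 0 < kap -> y <= y' ->
  ex_RInt u y y' -> (forall t, y <= t <= y' -> Rabs (u t) <= C0 * exp (- kap * t)) ->
  Rabs (RInt u y y') <= C0 * exp (- kap * y) / kap.
Proof.
  intros Hk Hy Hu Hb.
  assert (H : norm (RInt u y y') <= C0 * (exp (- kap * y) - exp (- kap * y')) / kap).
  { apply (@norm_RInt_le R_NormedModule u (fun t => C0 * exp (- kap * t)) y y').
    exact Hy. intros x Hx. rewrite Rabs_R_norm. apply Hb, Hx.
    apply (@RInt_correct R_CompleteNormedModule). exact Hu.
    apply exp_int, Hk. }
  rewrite Rabs_R_norm in H. eapply Rle_trans. exact H.
  assert (0 <= C0).
  { pose proof (Hb y (conj (Rle_refl y) Hy)). pose proof (Rabs_pos (u y)).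
    pose proof (exp_pos (- kap * y)). nra. }
  pose proof (exp_pos (- kap * y')).
  unfold Rdiv. apply Rmult_le_compat_r. left; apply Rinv_0_lt_compat, Hk.
  apply Rmult_le_compat_l. lra. lra.
Qed.

Lemma sqrt_le_half (x : R) : 0 <= x -> sqrt x <= (x + 1) / 2.
Proof.
  intros Hx. pose proof (sqrt_sqrt x Hx). pose proof (Rle_0_sqr (sqrt x - 1)).
  unfold Rsqr in H0. nra.
Qed.

Lemma Cmod_le_sum (z : C) : Cmod z <= Rabs (fst z) + Rabs (snd z).
Proof.
  destruct z as [x y]. unfold Cmod. simpl.
  rewrite <- (sqrt_square (Rabs x + Rabs y)).
  2:{ pose proof (Rabs_pos x); pose proof (Rabs_pos y); lra. }
  apply sqrt_le_1_alt.
  pose proof (Rabs_pos x); pose proof (Rabs_pos y).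
  replace (x * (x * 1) + y * (y * 1)) with (Rabs x * Rabs x + Rabs y * Rabs y).
  2:{ rewrite <- !Rabs_mult. rewrite !Rabs_right by nra. ring. }
  nra.
Qed.


Lemma comp_bound (f k : R -> R) (C0 lam al si : R) (N : nat) (a : nat -> R) (b : nat -> Rbar) :
  0 < C0 -> 0 < al -> al <= lam / 2 ->
  (forall y, 0 <= y -> ex_RInt f 0 y) ->
  (forall t, 0 <= f t) -> (forall t, t < 0 -> f t = 0) ->
  (forall t, 0 <= t -> f t <= C0 * exp (- lam * t)) ->
  (forall i, (i < N)%nat -> 0 <= a i /\ Rbar_lt (a i) (b i)) ->
  (forall i j, (i < j)%nat -> (j < N)%nat -> Rbar_le (b i) (a j) \/ Rbar_le (b j) (a i)) ->
  (forall t, 0 <= t -> f t <> 0 -> exists i, (i < N)%nat /\ a i <= t /\ Rbar_le t (b i)) ->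
  (forall i, (i < N)%nat -> monotone_on f (a i) (b i)) ->
  (forall x, continuous k x) -> (forall x, Rabs (k x) <= 1) ->
  (si <> 0 -> forall x, k (x + PI / Rabs si) = - k x) ->
  exists l, (forall eps, 0 < eps -> exists M, forall y, M <= y ->
               Rabs (RInt (fun t => f t * (exp (al * t) * k t)) 0 y - l) < eps) /\
            Rabs l <= C0 / al /\
            (Rmax 1 al <= Rabs si -> Rabs l <= (4 * INR N * C0 * PI + C0 / al) / sqrt (Rabs si)).
Proof.
  intros HC0 Hal Hall Hfi Hf0 Hfn Hfb Hab Hdis Hcov Hmon Hkc Hk1 Hkh.
  set (u := fun t => f t * (exp (al * t) * k t)).
  set (kap := lam - al).
  assert (Hkap : al <= kap) by (unfold kap; lra).
  assert (Hu : forall y y', 0 <= y -> y <= y' -> ex_RInt u y y').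
  { intros y y' H1 H2. destruct (Rle_lt_or_eq_dec _ _ H2) as [H2'|H2'].
    - apply ex_RInt_mult_cont. exact H2'.
      apply (ex_RInt_Chasles_2 f 0 y y'). lra. apply Hfi. lra.
      intros x _. apply (@continuous_mult R_UniformSpace R_AbsRing (fun t => exp (al * t)) k x).
      apply cont_deriv. auto_derive. auto. apply Hkc.
    - subst. apply ex_RInt_point. }
  assert (Hub : forall t, 0 <= t -> Rabs (u t) <= C0 * exp (- kap * t)).
  { intros t Ht. unfold u, kap. rewrite <- Rmult_assoc, Rabs_mult.
    rewrite Rabs_right.
    2:{ apply Rle_ge, Rmult_le_pos. apply Hf0. left; apply exp_pos. }
    eapply Rle_trans.
    2:{ apply (fw_bound f C0 lam al t); try lra. apply Hf0. apply Hfb, Ht. }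
    pose proof (Hk1 t). pose proof (Rabs_pos (k t)).
    assert (0 <= f t * exp (al * t)) by (apply Rmult_le_pos; [apply Hf0 | left; apply exp_pos]).
    replace (f t * exp (al * t)) with (f t * exp (al * t) * 1) at 2 by ring.
    apply Rmult_le_compat_l; lra. }
  assert (Htail : forall y y', 0 <= y -> y <= y' ->
     Rabs (RInt u 0 y' - RInt u 0 y) <= C0 * exp (- kap * y) / kap).
  { intros y y' H1 H2.
    rewrite (RInt_Chasles_R u 0 y y') by (try lra; apply Hu; lra).
    assert (E : forall p q : R, p + q - p = q) by (intros; ring). rewrite E.
    apply tail_bound. lra. exact H2. apply Hu; lra. intros t Ht. apply Hub. lra. }
  assert (Hcauchy : forall eps, 0 < eps -> exists M, forall y y', M <= y -> y <= y' ->
     Rabs (RInt u 0 y' - RInt u 0 y) < eps).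
  { intros eps Heps. exists (C0 / (kap * kap * eps) + 1). intros y y' H1 H2.
    assert (Hq : 0 < C0 / (kap * kap * eps)).
    { apply Rdiv_lt_0_compat. lra. apply Rmult_lt_0_compat. nra. lra. }
    eapply Rle_lt_trans. apply Htail. lra. exact H2.
    assert (Hy : 0 < kap * y) by nra.
    pose proof (exp_ineq1 (kap * y) ltac:(lra)) as He.
    assert (E1 : exp (- kap * y) * exp (kap * y) = 1).
    { rewrite <- exp_plus. replace (- kap * y + kap * y) with 0 by ring. apply exp_0. }
    assert (C0 < eps * kap * (kap * y)).
    { assert (C0 / (kap * kap * eps) * (kap * kap * eps) = C0) by (field; split; nra).
      assert (C0 / (kap * kap * eps) * (kap * kap * eps) < y * (kap * kap * eps)).
      { apply Rmult_lt_compat_r. apply Rmult_lt_0_compat. nra. lra. lra. }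
      nra. }
    assert (C0 < eps * kap * exp (kap * y)).
    { assert (eps * kap * (kap * y) < eps * kap * exp (kap * y)).
      { apply Rmult_lt_compat_l. nra. lra. }
      lra. }
    apply Rmult_lt_reg_r with kap. lra.
    unfold Rdiv. rewrite Rmult_assoc, Rinv_l by lra. rewrite Rmult_1_r.
    apply Rmult_lt_reg_r with (exp (kap * y)). apply exp_pos.
    rewrite Rmult_assoc, E1. lra. }
  destruct (lim_cauchy (fun y => RInt u 0 y) Hcauchy) as [l Hl].
  exists l. split; [exact Hl|]. split.
  - apply (lim_bound (fun y => RInt u 0 y) l (C0 / al) 0). exact Hl.
    intros y Hy.
    pose proof (Htail 0 y (Rle_refl 0) Hy) as H.
    rewrite RInt_point in H. unfold zero in H; simpl in H.
    rewrite Rminus_0_r, Rmult_0_r, exp_0, Rmult_1_r in H.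
    eapply Rle_trans. exact H.
    unfold Rdiv. apply Rmult_le_compat_l. lra. apply Rinv_le_contravar; lra.
  - intros Hsi.
    set (w := Rabs si).
    assert (Hw1 : 1 <= w) by (pose proof (Rmax_l 1 al); unfold w; lra).
    assert (Hsi0 : si <> 0).
    { intros E. unfold w in Hw1. rewrite E, Rabs_R0 in Hw1. lra. }
    set (T := ln w / (2 * al)).
    assert (HT : 0 <= T).
    { unfold T. apply Rmult_le_pos. rewrite <- ln_1. destruct Hw1 as [Hw1|Hw1].
      left. apply ln_increasing; lra. rewrite Hw1. lra.
      left. apply Rinv_0_lt_compat. lra. }
    assert (HeT : exp (al * T) = sqrt w).
    { rewrite <- Rpower_sqrt by lra. unfold Rpower, T. f_equal. field. lra. }
    assert (Hsw : 0 < sqrt w) by (apply sqrt_lt_R0; lra).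
    set (h := PI / w).
    assert (Hh : 0 < h) by (apply Rdiv_lt_0_compat; [apply PI_RGT_0 | lra]).
    set (A0 := 4 * INR N * C0 * PI + C0 / al).
    apply (lim_bound (fun y => RInt u 0 y) l (A0 / sqrt w) T). exact Hl.
    intros y Hy.
    assert (Hhead : Rabs (RInt u 0 T) <= INR N * (4 * C0 * exp (al * T) * h)).
    { unfold u. apply (head_bound f k C0 lam al T h N a b); try assumption. lra.
      apply Hkh, Hsi0. }
    pose proof (Htail T y HT Hy) as Ht.
    assert (E : forall p q : R, q = p + (q - p)) by (intros; ring).
    rewrite (E (RInt u 0 T) (RInt u 0 y)).
    eapply Rle_trans. apply Rabs_triang.
    assert (E1 : INR N * (4 * C0 * exp (al * T) * h) = 4 * INR N * C0 * PI / sqrt w).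
    { rewrite HeT. unfold h. rewrite <- (sqrt_sqrt w) at 2 by lra. field. lra. }
    assert (E2 : C0 * exp (- kap * T) / kap <= C0 / al / sqrt w).
    { assert (exp (- kap * T) <= exp (- (al * T))) by (apply exp_mono; nra).
      rewrite exp_Ropp, HeT in H.
      unfold Rdiv. rewrite Rmult_assoc, (Rmult_assoc C0). apply Rmult_le_compat_l. lra.
      rewrite Rmult_comm. apply Rmult_le_compat.
      left; apply Rinv_0_lt_compat; lra. left; apply exp_pos.
      apply Rinv_le_contravar; lra. exact H. }
    unfold A0. rewrite E1 in Hhead.
    replace ((4 * INR N * C0 * PI + C0 / al) / sqrt w) with
      (4 * INR N * C0 * PI / sqrt w + C0 / al / sqrt w) by (field; lra).
    lra.
Qed.


Lemma trig_shift (si : R) : si <> 0 -> forall x,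
  cos (- (si * (x + PI / Rabs si))) = - cos (- (si * x)) /\
  sin (- (si * (x + PI / Rabs si))) = - sin (- (si * x)).
Proof.
  intros Hs x. destruct (Rlt_le_dec 0 si) as [Hp|Hn].
  - rewrite Rabs_right by lra.
    replace (- (si * (x + PI / si))) with (- (si * x) - PI) by (field; lra).
    rewrite cos_minus, sin_minus, cos_PI, sin_PI. split; ring.
  - rewrite Rabs_left by lra.
    replace (- (si * (x + PI / - si))) with (- (si * x) + PI) by (field; lra).
    rewrite neg_cos, neg_sin. split; reflexivity.
Qed.

Lemma density_int (f : R -> R) :
  is_RInt_gen f (at_point 0) (Rbar_locally p_infty) 1 -> forall y, 0 <= y -> ex_RInt f 0 y.
Proof.
  intros H y Hy.
  assert (HP : locally (1 : R_NormedModule) (fun _ => True)).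
  { exists (mkposreal 1 Rlt_0_1). intros; exact I. }
  specialize (H _ HP). destruct H as [Q R' HQ HR HQR].
  destruct HR as [M HM].
  set (Y := Rmax y M + 1).
  destruct (HQR 0 Y HQ) as [v [Hv _]].
  { apply HM. unfold Y. pose proof (Rmax_r y M). lra. }
  apply (ex_RInt_Chasles_1 f 0 y Y). split. exact Hy. unfold Y. pose proof (Rmax_l y M). lra.
  exists v. exact Hv.
Qed.

Theorem lemma11 (C0 lam alpha : R) (N : nat) :
  0 < C0 -> 0 < lam -> 0 < alpha -> alpha <= lam / 2 ->
  exists K : R,
    forall f : R -> R,
      is_density_on_nonneg f ->
      (forall t, 0 <= t -> f t <= C0 * exp (- lam * t)) ->
      piecewise_diff_monotone N f ->
      forall s : C, Re s = - alpha ->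
        Cmod (laplace_density f s) <= K / sqrt (Cmod s).
Proof.
  intros HC0 Hlam Hal Hall.
  set (A0 := 4 * INR N * C0 * PI + C0 / alpha).
  set (W0 := Rmax 1 alpha).
  exists (4 * A0 + 2 * (C0 / alpha) * (2 * W0 + 1)).
  intros f [Hf0 [Hfn Hint]] Hfb [a [b [Hab [Hdis [Hcov Hpc]]]]] s Hs.
  assert (Hmon : forall i, (i < N)%nat -> monotone_on f (a i) (b i)).
  { intros i Hi. apply (Hpc i Hi). }
  assert (Hfi := density_int f Hint).
  destruct s as [sr si]. simpl in Hs.
  set (k1 := fun t => cos (- (si * t))).
  set (k2 := fun t => sin (- (si * t))).
  destruct (comp_bound f k1 C0 lam alpha si N a b) as [l1 [Hl1 [Bl1 Bl1']]];
    try assumption.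
  { intros x. apply cont_deriv. unfold k1. auto_derive. auto. }
  { intros x. apply Rabs_le. apply COS_bound. }
  { intros Hsi x. apply (trig_shift si Hsi x). }
  destruct (comp_bound f k2 C0 lam alpha si N a b) as [l2 [Hl2 [Bl2 Bl2']]];
    try assumption.
  { intros x. apply cont_deriv. unfold k2. auto_derive. auto. }
  { intros x. apply Rabs_le. apply SIN_bound. }
  { intros Hsi x. apply (trig_shift si Hsi x). }
  set (F := fun t : R => scal (f t) (Cexp (Copp (Cmult (sr, si) (RtoC t))))).
  set (u1 := fun t => f t * (exp (alpha * t) * k1 t)).
  set (u2 := fun t => f t * (exp (alpha * t) * k2 t)).
  assert (HF1 : forall t, fst (F t) = u1 t).
  { intros t. unfold F, u1, k1, Cexp, Copp, Cmult, RtoC. simpl.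
    unfold scal; simpl; unfold mult; simpl. rewrite Hs.
    replace (- (- alpha * t - si * 0)) with (alpha * t) by ring.
    replace (- (- alpha * 0 + si * t)) with (- (si * t)) by ring. reflexivity. }
  assert (HF2 : forall t, snd (F t) = u2 t).
  { intros t. unfold F, u2, k2, Cexp, Copp, Cmult, RtoC. simpl.
    unfold scal; simpl; unfold mult; simpl. rewrite Hs.
    replace (- (- alpha * t - si * 0)) with (alpha * t) by ring.
    replace (- (- alpha * 0 + si * t)) with (- (si * t)) by ring. reflexivity. }
  assert (Hu1 : forall y, 0 <= y -> ex_RInt u1 0 y).
  { intros y Hy. destruct (Rle_lt_or_eq_dec _ _ Hy) as [Hy'|Hy'].
    - apply ex_RInt_mult_cont. exact Hy'. apply Hfi; lra.
      intros x _. apply cont_deriv. unfold k1. auto_derive. auto.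
    - subst. apply ex_RInt_point. }
  assert (Hu2 : forall y, 0 <= y -> ex_RInt u2 0 y).
  { intros y Hy. destruct (Rle_lt_or_eq_dec _ _ Hy) as [Hy'|Hy'].
    - apply ex_RInt_mult_cont. exact Hy'. apply Hfi; lra.
      intros x _. apply cont_deriv. unfold k2. auto_derive. auto.
    - subst. apply ex_RInt_point. }
  assert (HG : is_RInt_gen F (at_point 0) (Rbar_locally p_infty) (l1, l2)).
  { intros P [eps HP].
    destruct (Hl1 eps (cond_pos eps)) as [M1 HM1].
    destruct (Hl2 eps (cond_pos eps)) as [M2 HM2].
    apply Filter_prod with (fun x => x = 0) (fun y => Rmax 0 (Rmax M1 M2) < y).
    - reflexivity.
    - exists (Rmax 0 (Rmax M1 M2)). intros; assumption.
    - intros x y -> Hy.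
      pose proof (Rmax_l 0 (Rmax M1 M2)). pose proof (Rmax_r 0 (Rmax M1 M2)).
      pose proof (Rmax_l M1 M2). pose proof (Rmax_r M1 M2).
      exists (RInt u1 0 y, RInt u2 0 y). split.
      + apply (is_RInt_fct_extend_pair F).
        * apply (@is_RInt_ext R_NormedModule u1). intros; rewrite HF1; reflexivity.
          apply (@RInt_correct R_CompleteNormedModule). apply Hu1; lra.
        * apply (@is_RInt_ext R_NormedModule u2). intros; rewrite HF2; reflexivity.
          apply (@RInt_correct R_CompleteNormedModule). apply Hu2; lra.
      + apply HP. split.
        * change (Rabs (RInt u1 0 y - l1) < eps). apply HM1. lra.
        * change (Rabs (RInt u2 0 y - l2) < eps). apply HM2. lra. }
  assert (E : laplace_density f (sr, si) = (l1, l2)).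
  { unfold laplace_density. apply (@is_RInt_gen_unique C_R_CompleteNormedModule); [typeclasses eauto | typeclasses eauto | exact HG]. }
  rewrite E.
  pose proof (Cmod_le_sum (l1, l2)) as Hc. simpl in Hc.
  pose proof (Cmod_le_sum (sr, si)) as Hcs. simpl in Hcs.
  replace (Rabs sr) with alpha in Hcs by (rewrite Hs, Rabs_Ropp, Rabs_right; lra).
  set (Cs := Cmod (sr, si)) in *.
  assert (HCs : alpha <= Cs).
  { unfold Cs, Cmod. simpl. rewrite <- (sqrt_square alpha) by lra. apply sqrt_le_1_alt.
    rewrite Hs. nra. }
  set (sq := sqrt Cs).
  assert (Hsq : 0 < sq) by (apply sqrt_lt_R0; lra).
  assert (HA0 : 0 <= A0).
  { unfold A0. pose proof (pos_INR N). pose proof PI_RGT_0.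
    assert (0 <= C0 / alpha) by (apply Rlt_le, Rdiv_lt_0_compat; lra).
    assert (0 <= INR N * C0 * PI) by (apply Rmult_le_pos; [apply Rmult_le_pos|]; lra). lra. }
  assert (HW0 : 1 <= W0 /\ alpha <= W0) by (unfold W0; split; [apply Rmax_l | apply Rmax_r]).
  assert (HCa : 0 < C0 / alpha) by (apply Rdiv_lt_0_compat; lra).
  apply (Rmult_le_reg_r sq). exact Hsq.
  unfold Rdiv at 1. rewrite Rmult_assoc, Rinv_l, Rmult_1_r by lra.
  apply Rle_trans with ((Rabs l1 + Rabs l2) * sq).
  { apply Rmult_le_compat_r; lra. }
  destruct (Rle_lt_dec W0 (Rabs si)) as [Hbig|Hsmall].
  - specialize (Bl1' Hbig). specialize (Bl2' Hbig). fold A0 in Bl1', Bl2'.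
    assert (Hw : 0 < sqrt (Rabs si)) by (apply sqrt_lt_R0; lra).
    assert (Hsq2 : sq <= 2 * sqrt (Rabs si)).
    { unfold sq. pose proof (Rabs_pos si). replace 2 with (sqrt 4).
      rewrite <- sqrt_mult by lra. apply sqrt_le_1_alt. lra.
      replace 4 with (2 * 2) by ring. apply sqrt_square. lra. }
    apply Rle_trans with (2 * (A0 / sqrt (Rabs si)) * (2 * sqrt (Rabs si))).
    { apply Rmult_le_compat. pose proof (Rabs_pos l1); pose proof (Rabs_pos l2); lra. lra. lra. lra. }
    replace (2 * (A0 / sqrt (Rabs si)) * (2 * sqrt (Rabs si))) with (4 * A0) by (field; lra).
    assert (0 <= 2 * (C0 / alpha) * (2 * W0 + 1)) by (apply Rmult_le_pos; lra).
    lra.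
  - assert (Hsq2 : sq <= 2 * W0 + 1).
    { unfold sq. pose proof (sqrt_le_half Cs ltac:(lra)). lra. }
    apply Rle_trans with (2 * (C0 / alpha) * (2 * W0 + 1)).
    { apply Rmult_le_compat. pose proof (Rabs_pos l1); pose proof (Rabs_pos l2); lra. lra. lra. lra. }
    lra.
Qed.
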